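(* Let $X$ be a compact metric space and $f\colon X\to X$ a positively $n$-expansive homeomorphism which has the shadowing property and admits only finitely many chain recurrent classes. Then $X$ is finite.
   Context: $f$ is positively $n$-expansive if there exists $c>0$ such that for every $x\in X$ the set $W^s_c(x)=\{y: d(f^k(y),f^k(x))\leq c \ \forall k\geq0\}$ has at most $n$ points. $f$ has the shadowing property if for every $\varepsilon>0$ there is $\delta>0$ such that for every $(x_k)_{k\in\mathbb{Z}}$ with $d(f(x_k),x_{k+1})<\delta$ for all $k$ there is $y$ with $d(f^k(y),x_k)<\varepsilon$ for all $k$. A point $x$ is chain recurrent if for each $\varepsilon>0$ there is a nontrivial finite $\varepsilon$-pseudo orbit (a sequence $x_0,\dots,x_l$ with $d(f(x_k),x_{k+1})<\varepsilon$) starting and ending at $x$. The chain recurrent class of a chain recurrent point $x$ is the set of $y$ such that for every $\varepsilon>0$ there is a periodic $\varepsilon$-pseudo orbit containing both $x$ and $y$; the chain recurrent set is partitioned into these classes. *)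

(* Defs.v *)
(* A compact metric space is a [metricType R]
   (R : realType) whose full set is [compact]; distance = [mdist]. *)
From HB Require Import structures.
From mathcomp Require Import all_boot all_order all_algebra.
From mathcomp Require Import all_classical all_reals all_analysis.
Set Implicit Arguments. Unset Strict Implicit. Unset Printing Implicit Defensive.
Import Order.TTheory GRing.Theory Num.Theory.
Local Open Scope classical_set_scope.
Local Open Scope ring_scope.

Section Dyn.
Context {R : realType} {X : metricType R}.
Notation d := (@mdist R X).

Definition stable_set (f : X -> X) (c : R) (x : X) : set X :=
  [set y | forall k : nat, d (iter k f y) (iter k f x) <= c].

Definition pos_n_expansive (f : X -> X) (n : nat) : Prop :=
  exists2 c : R, 0 < c &
    forall x : X, exists s : seq X, (size s <= n)%N /\ stable_set f c x `<=` [set` s].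

(* shadowing: every (bi-infinite) delta-pseudo orbit is eps-shadowed by the
   orbit (f^k y)_{k in Z} of some y; the full orbit is encoded as a sequence
   ys : int -> X with ys 0 = y and ys (k+1) = f (ys k) for all integers k. *)
Definition shadowing (f : X -> X) : Prop :=
  forall eps : R, 0 < eps -> exists2 delta : R, 0 < delta &
    forall xs : int -> X, (forall k : int, d (f (xs k)) (xs (k + 1)) < delta) ->
      exists ys : int -> X, (forall k : int, ys (k + 1) = f (ys k)) /\
        (forall k : int, d (ys k) (xs k) < eps).

Definition pseudo_chain (f : X -> X) (eps : R) (x y : X) : Prop :=
  exists l : nat, exists u : nat -> X, (0 < l)%N /\ u 0%N = x /\ u l = y /\
    forall k : nat, (k < l)%N -> d (f (u k)) (u k.+1) < eps.

Definition chain_recurrent (f : X -> X) (x : X) : Prop :=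
  forall eps : R, 0 < eps -> pseudo_chain f eps x x.

Definition periodic_pseudo_orbit_through (f : X -> X) (eps : R) (x y : X) : Prop :=
  exists u : nat -> X, exists p : nat, (0 < p)%N /\
    (forall k : nat, u (k + p)%N = u k) /\
    (forall k : nat, d (f (u k)) (u k.+1) < eps) /\
    (exists i : nat, u i = x) /\ (exists j : nat, u j = y).

Definition chain_class (f : X -> X) (x : X) : set X :=
  [set y | forall eps : R, 0 < eps -> periodic_pseudo_orbit_through f eps x y].

Definition chain_classes (f : X -> X) : set (set X) :=
  [set C | exists2 x, chain_recurrent f x & C = chain_class f x].

End Dyn.

(* Main.v *)
Require Import Defs.
From HB Require Import structures.
From mathcomp Require Import all_boot all_order all_algebra.
From mathcomp Require Import all_classical all_reals all_analysis.
From mathcomp Require Import zify.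
From mathcomp Require Import lra.
Import Order.TTheory GRing.Theory Num.Theory.
Local Open Scope classical_set_scope.
Local Open Scope ring_scope.

Section S.
Context {R : realType} {X : metricType R}.
Local Notation d := (@mdist R X).

Lemma dsym (x y : X) : d x y = d y x. Proof. exact: metric_sym. Qed.
Lemma dtri (x y z : X) : d x z <= d x y + d y z. Proof. exact: metric_triangle. Qed.
Lemma dxx (x : X) : d x x = 0. Proof. exact: mdistxx. Qed.

Lemma cont_eps (f : X -> X) : continuous f -> forall x (e : R), 0 < e ->
  exists2 r : R, 0 < r & forall z, mdist x z < r -> mdist (f x) (f z) < e.
Proof.
move=> fc x e e0.
have := fc x (ball (f x) e) (nbhsx_ballx _ _ e0).
move=> /nbhs_ballP [r r0 H]; exists r => // z xz.
have := H z; rewrite ballEmdist /= => /(_ xz).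
by rewrite ballEmdist.
Qed.

Variables (f g : X -> X).
Hypothesis fK : cancel f g.
Hypothesis gK : cancel g f.

Definition chainp (e : R) (u : nat -> X) (l : nat) :=
  forall k, (k < l)%N -> d (f (u k)) (u k.+1) < e.
Definition pc (e : R) (x y : X) (l : nat) :=
  exists u, [/\ u 0%N = x, u l = y & chainp e u l].
Definition catf (u : nat -> X) (l1 : nat) (v : nat -> X) (k : nat) :=
  if (k <= l1)%N then u k else v (k - l1)%N.

Lemma catfL u l1 v k : (k <= l1)%N -> catf u l1 v k = u k.
Proof. by rewrite /catf => ->. Qed.
Lemma catfR u l1 v t : u l1 = v 0%N -> catf u l1 v (l1 + t) = v t.
Proof.
rewrite /catf => e; case: t => [|t]; first by rewrite addn0 leqnn.
have -> : (l1 + t.+1 <= l1)%N = false by lia.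
by rewrite addKn.
Qed.

Lemma chainp_cat e u v l1 l2 : chainp e u l1 -> chainp e v l2 -> u l1 = v 0%N ->
  chainp e (catf u l1 v) (l1 + l2).
Proof.
move=> hu hv e1 k kl.
case: (ltnP k l1) => kl1.
  rewrite !catfL //; [exact: hu | exact: ltnW].
have -> : k = (l1 + (k - l1))%N by rewrite subnKC.
rewrite -addnS !catfR //; apply: hv; lia.
Qed.

Lemma pc_cat e x y z l1 l2 : pc e x y l1 -> pc e y z l2 -> pc e x z (l1 + l2).
Proof.
move=> [u [u0 ul hu]] [v [v0 vl hv]].
exists (catf u l1 v); split.
- by rewrite catfL.
- by rewrite catfR ?vl // ul v0.
- by apply: chainp_cat => //; rewrite ul v0.
Qed.

Lemma pc_step e x : 0 < e -> pc e x (f x) 1.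
Proof.
move=> e0; exists (fun k => if k is 0%N then x else f x); split => //.
by move=> k; rewrite ltnS leqn0 => /eqP ->; rewrite dxx.
Qed.

Lemma pc_le e e' x y l : e <= e' -> pc e x y l -> pc e' x y l.
Proof.
move=> ee [u [u0 ul hu]]; exists u; split => // k kl.
exact: lt_le_trans (hu k kl) ee.
Qed.

Lemma pcP e x y : pseudo_chain f e x y <-> exists2 l, (0 < l)%N & pc e x y l.
Proof.
split.
  by move=> [l [u [l0 [u0 [ul hu]]]]]; exists l => //; exists u; split.
by move=> [l l0 [u [u0 ul hu]]]; exists l, u.
Qed.

End S.

Arguments chainp_cat {R X f e u v l1 l2}.
Arguments pc_cat {R X f e x y z l1 l2}.
Arguments pc_le {R X f e e' x y l}.
Section S2.
Context {R : realType} {X : metricType R}.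
Local Notation d := (@mdist R X).
Variables (f g : X -> X).
Hypothesis fK : cancel f g.
Hypothesis gK : cancel g f.
Hypothesis fc : continuous f.

Lemma reach_f a x : chain_recurrent f a -> (forall e, 0 < e -> pseudo_chain f e x a) ->
  forall e, 0 < e -> pseudo_chain f e (f x) a.
Proof.
move=> ha hx e e0.
have e20 : 0 < e / 2 by rewrite divr_gt0.
have [r r0 hr] := @cont_eps R X f fc (f x) _ e20.
pose e' := Order.min r (e / 2).
have e'0 : 0 < e' by rewrite lt_min r0 e20.
have e'r : e' <= r by rewrite ge_min lexx.
have e'e : e' <= e / 2 by rewrite ge_min lexx orbT.
have [l l0 [u [u0 ul hu]]] := (pcP f e' x a).1 (hx e' e'0).
have [l' l'0 [v [v0 vl hv]]] := (pcP f e' a a).1 (ha e' e'0).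
have uv : u l = v 0%N by rewrite ul v0.
have hW := chainp_cat hu hv uv.
set W := catf u l v in hW.
have W0 : W 0%N = x by rewrite /W catfL.
have WL : W (l + l')%N = a by rewrite /W catfR.
apply/pcP; exists (l + l').-1; first lia.
exists (fun k => if k is 0%N then f x else W k.+1); split => //.
  by case E : (l + l').-1 => [|m]; [lia | rewrite -E prednK ?WL //; lia].
move=> [|k] kl /=.
  have h0 := hW 0%N ltac:(lia); rewrite W0 in h0.
  have h1 := hW 1%N ltac:(lia).
  have h2 := hr (W 1%N) (lt_le_trans h0 e'r).
  have := dtri (f (f x)) (f (W 1%N)) (W 2%N).
  lra.
by apply: lt_le_trans (hW k.+2 ltac:(lia)) _; lra.
Qed.

Lemma reach_iter a x k : chain_recurrent f a -> (forall e, 0 < e -> pseudo_chain f e x a) ->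
  forall e, 0 < e -> pseudo_chain f e (iter k f x) a.
Proof.
move=> ha hx; elim: k => [|k IH] //=; exact: reach_f.
Qed.

End S2.

Section S3.
Context {R : realType} {X : metricType R}.
Local Notation d := (@mdist R X).

Lemma cluster_lem (I : Type) (B : I -> set X) :
  compact [set: X] ->
  (forall i j, exists k, B k `<=` B i `&` B j) ->
  (exists i : I, True) ->
  (forall i, B i !=set0) ->
  exists y, forall i r, 0 < r -> exists z, B i z /\ d y z < r.
Proof.
move=> cX BI i0 Bn0.
have FF : Filter (filter_from setT B) := filter_fromT_filter i0 BI.
have PF : ProperFilter (filter_from setT B).
  by apply: filter_from_proper => i _; exact: Bn0.
have [y [_ cly]] := cX _ PF filterT.
exists y => i r r0.
have [|z [Biz yz]] := cly (B i) (ball y r) _ (nbhsx_ballx y r r0).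
  by exists i.
by exists z; split => //; move: yz; rewrite ballEmdist.
Qed.

Lemma PH (h : nat -> X) (N : nat) (s : seq X) :
  (forall i, (i <= N)%N -> h i \in s) -> (size s <= N)%N ->
  exists i j, [/\ (i < j)%N, (j <= N)%N & h i = h j].
Proof.
move=> hs sz; apply: contrapT => nex.
have inj : {in iota 0 N.+1 &, injective h}.
  move=> i j; rewrite !mem_iota !add0n => /andP[_ iN] /andP[_ jN] hij.
  case: (ltngtP i j) => // ij; exfalso; apply: nex.
  - by exists i, j; split => //; lia.
  - by exists j, i; split => //; lia.
have U : uniq (map h (iota 0 N.+1)) by rewrite (map_inj_in_uniq inj) iota_uniq.
have sub : {subset map h (iota 0 N.+1) <= s}.
  move=> x /mapP [i]; rewrite mem_iota add0n => /andP[_ iN] ->.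
  by apply: hs; lia.
have := uniq_leq_size U sub; rewrite size_map size_iota => hh.
by have := leq_trans hh sz; rewrite ltnn.
Qed.

Lemma LM (s : seq X) (P : X -> R -> Prop) :
  (forall q r r', P q r -> 0 < r' -> r' <= r -> P q r') ->
  (forall q, q \in s -> exists2 r, 0 < r & P q r) ->
  exists2 r, 0 < r & forall q, q \in s -> P q r.
Proof.
move=> mono; elim: s => [|q s IH] H.
  by exists 1 => // q; rewrite in_nil.
have [r1 r10 h1] := H q (mem_head _ _).
have [r2 r20 h2] : exists2 r, 0 < r & forall q', q' \in s -> P q' r.
  by apply: IH => q' q's; apply: H; rewrite in_cons q's orbT.
exists (Order.min r1 r2); first by rewrite lt_min r10 r20.
move=> q'; rewrite in_cons => /orP[/eqP->|q's].
  by apply: mono h1 _ _; rewrite ?lt_min ?r10 ?r20 // ge_min lexx.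
by apply: mono (h2 _ q's) _ _; rewrite ?lt_min ?r10 ?r20 // ge_min lexx orbT.
Qed.

End S3.

Lemma i1 (m : nat) : Posz m + 1 = Posz m.+1. Proof. lia. Qed.
Lemma i2 : Negz 0 + 1 = 0 :> int. Proof. lia. Qed.
Lemma i3 (m : nat) : Negz m.+1 + 1 = Negz m. Proof. lia. Qed.

Section S4.
Context {R : realType} {X : metricType R}.
Local Notation d := (@mdist R X).
Variables (f g : X -> X).
Hypothesis fK : cancel f g.
Hypothesis gK : cancel g f.

Lemma shadow_word (eps delta : R) (a : X) (w : nat -> X) (N : nat) :
  0 < delta ->
  (forall xs : int -> X, (forall k : int, d (f (xs k)) (xs (k + 1)) < delta) ->
      exists ys : int -> X, (forall k : int, ys (k + 1) = f (ys k)) /\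
        (forall k : int, d (ys k) (xs k) < eps)) ->
  w 0%N = a -> w N = a -> chainp f delta w N ->
  exists z, (forall m, d (iter m f z) (iter m f a) < eps) /\
            (forall t, (t < N)%N -> d (iter (N - t) g z) (w t) < eps).
Proof.
move=> d0 sh w0 wN hw.
pose xs (k : int) := match k with
  | Posz m => iter m f a
  | Negz m => if (m < N)%N then w (N - m.+1)%N else iter (m.+1 - N) g a end.
have hxs : forall k, d (f (xs k)) (xs (k + 1)) < delta.
  case => [m|[|m]].
  - by rewrite i1 /= dxx.
  - rewrite i2 /=; case: ifP => N0.
      have := hw N.-1 ltac:(lia).
      by rewrite prednK // subn1 wN.
    have -> : (1 - N = 1)%N by lia.
    by rewrite /= gK dxx.
  - rewrite i3 /=; case: ifP => mN.
      rewrite (_ : (m < N)%N = true); last by lia.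
      have := hw (N - m.+2)%N ltac:(lia).
      by rewrite (_ : ((N - m.+2).+1 = N - m.+1)%N); last lia.
    case: ifP => mN'.
      have -> : (m.+2 - N = 1)%N by lia.
      have -> : (N - m.+1 = 0)%N by lia.
      by rewrite /= gK w0 dxx.
    have -> : (m.+2 - N = (m.+1 - N).+1)%N by lia.
    by rewrite /= gK dxx.
have [ys [hys1 hys2]] := sh xs hxs.
exists (ys 0).
have yP : forall m, ys (Posz m) = iter m f (ys 0).
  by elim => [|m IH] //=; rewrite -IH -hys1 i1.
have yN : forall m, ys (Negz m) = iter m.+1 g (ys 0).
  elim => [|m IH].
    by rewrite /= -[ys (Negz 0)]fK -hys1 i2.
  by rewrite [RHS]iterS -IH -[ys (Negz m.+1)]fK -hys1 i3.
split.
  by move=> m; rewrite -yP; exact: (hys2 (Posz m)).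
move=> t tN; have := hys2 (Negz (N - t).-1).
rewrite yN prednK; last by lia.
rewrite /xs (_ : ((N - t).-1 < N)%N = true); last by lia.
by rewrite (_ : (N - ((N - t).-1).+1 = t)%N); last lia.
Qed.

End S4.

Section S5.
Context {R : realType} {X : metricType R}.
Local Notation d := (@mdist R X).
Variables (f g : X -> X).
Hypothesis fK : cancel f g.
Hypothesis gK : cancel g f.

Fixpoint rep (a : X) (L : nat -> X) (P m : nat) : nat -> X :=
  if m is m'.+1 then catf L P (rep a L P m') else fun _ => a.

Lemma rep0 a L P m : L 0%N = a -> rep a L P m 0%N = a.
Proof. by case: m => [|m] //= L0; rewrite catfL. Qed.

Lemma repE a L P m : L 0%N = a -> L P = a -> rep a L P m (m * P)%N = a.
Proof.
move=> L0 LP; elim: m => [|m IH] //=.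
by rewrite mulSn catfR // LP rep0.
Qed.

Lemma rep_chain e a L P m : L 0%N = a -> L P = a -> chainp f e L P ->
  chainp f e (rep a L P m) (m * P).
Proof.
move=> L0 LP hL; elim: m => [|m IH] /=; first by move=> k; rewrite mul0n.
by rewrite mulSn; apply: chainp_cat => //; rewrite LP rep0.
Qed.

Lemma rep_val a L P m j r : L 0%N = a -> L P = a -> (j < m)%N -> (r <= P)%N ->
  rep a L P m (j * P + r)%N = L r.
Proof.
move=> L0 LP; elim: m j => [|m IH] [|j] //= jm rP.
  by rewrite mul0n add0n catfL.
by rewrite mulSn -addnA catfR ?LP ?rep0 // IH.
Qed.

Lemma word_contra (n : nat) (c delta : R) (a x y : X) (S T : nat) (LX LY : nat -> X) :
  0 < c -> 0 < delta ->
  (forall x0 : X, exists s : seq X, (size s <= n)%N /\ stable_set f c x0 `<=` [set` s]) ->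
  (forall xs : int -> X, (forall k : int, d (f (xs k)) (xs (k + 1)) < delta) ->
      exists ys : int -> X, (forall k : int, ys (k + 1) = f (ys k)) /\
        (forall k : int, d (ys k) (xs k) < c / 2)) ->
  LX 0%N = a -> LX (S + T)%N = a -> LX S = x -> chainp f delta LX (S + T) ->
  LY 0%N = a -> LY (S + T)%N = a -> LY S = y -> chainp f delta LY (S + T) ->
  (0 < S)%N -> (0 < T)%N -> c < d x y -> False.
Proof.
move=> c0 d0 hexp sh LX0 LXP LXS hLX LY0 LYP LYS hLY S0 T0 cxy.
set P := (S + T)%N.
pose W i := catf (rep a LX P i) (i * P) (rep a LY P (n - i)).
pose N := (n * P)%N.
have WN : forall i, (i <= n)%N -> (i * P + (n - i) * P = N)%N.
  by move=> i iN; rewrite -mulnDl subnKC.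
have W0 : forall i, W i 0%N = a by move=> i; rewrite /W catfL // rep0.
have WNa : forall i, (i <= n)%N -> W i N = a.
  by move=> i iN; rewrite -(WN i iN) /W catfR ?repE ?rep0.
have hW : forall i, (i <= n)%N -> chainp f delta (W i) N.
  move=> i iN; rewrite -(WN i iN); apply: chainp_cat; try exact: rep_chain.
  by rewrite repE ?rep0.
have : forall i : nat, exists z : X, (i <= n)%N ->
    (forall m, d (iter m f z) (iter m f a) < c / 2) /\
    (forall t, (t < N)%N -> d (iter (N - t) g z) (W i t) < c / 2).
  move=> i; case: (leqP i n) => iN; last by exists a.
  have [z hz] := @shadow_word _ _ f g fK gK _ _ _ _ _ d0 sh (W0 i) (WNa i iN) (hW i iN).
  by exists z.
move=> /choice [zf hzf].
have [s [ss hs]] := hexp (zf 0%N).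
have [i [j [ij jn zij]]] : exists i j, [/\ (i < j)%N, (j <= n)%N & zf i = zf j].
  apply: PH ss => i iN; apply: (hs (zf i)) => k.
  have [h1 _] := hzf i iN; have [h2 _] := hzf 0%N (leq0n n).
  have := h1 k; have := h2 k.
  have := dtri (iter k f (zf i)) (iter k f a) (iter k f (zf 0%N)).
  rewrite (dsym (iter k f a) (iter k f (zf 0%N))); lra.
set t0 := (i * P + S)%N.
have t0N : (t0 < N)%N.
  rewrite /t0 /N /P; have : (i.+1 <= n)%N by exact: leq_trans ij jn.
  by move=> h; apply: (leq_trans _ (leq_mul h (leqnn (S + T)))); rewrite mulSn; lia.
have Wi : W i t0 = y.
  rewrite /W /t0 catfR ?repE ?rep0 //.
  rewrite -[S]add0n -[0%N](mul0n P) rep_val //; [lia | rewrite /P; lia].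
have Wj : W j t0 = x.
  rewrite /W catfL; last by rewrite /t0 /P; have : (i.+1 <= j)%N by []; move=> h; apply: (leq_trans _ (leq_mul h (leqnn (S + T)))); rewrite mulSn; lia.
  by rewrite /t0 rep_val // /P; lia.
have [_ h1] := hzf i (ltnW (leq_trans ij jn)).
have [_ h2] := hzf j jn.
have h3 := h1 t0 t0N; have h4 := h2 t0 t0N; rewrite Wi zij in h3; rewrite Wj in h4.
have h5 := dtri x (iter (N - t0) g (zf j)) y.
rewrite (dsym x (iter _ g _)) in h5; lra.
Qed.

End S5.

Arguments chainp_cat {R X f e u v l1 l2}.
Arguments pc_cat {R X f e x y z l1 l2}.
Section S6.
Context {R : realType} {X : metricType R}.
Local Notation d := (@mdist R X).
Variables (f g : X -> X).
Hypothesis fK : cancel f g.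
Hypothesis gK : cancel g f.
Hypothesis fc : continuous f.

Definition Cl (a : X) : set X := [set x | (forall e, 0 < e -> pseudo_chain f e a x) /\
   (forall e, 0 < e -> pseudo_chain f e x a)].

Lemma pc_swap_last e a p0 p S : (0 < S)%N -> pc f (e / 2) a p0 S -> d p0 p < e / 2 ->
  pc f e a p S.
Proof.
move=> S0 [u [u0 uS hu]] dp.
exists (fun k => if k == S then p else u k); split.
- by rewrite (_ : (0 == S) = false) //; apply/negbTE; rewrite eq_sym -lt0n.
- by rewrite eqxx.
move=> k kS; rewrite (_ : (k == S) = false); last by apply/negbTE; rewrite neq_ltn kS.
case: eqP => [kS'|_].
  have := hu k kS; rewrite kS' uS => h.
  have := dtri (f (u k)) p0 p; lra.
by have := hu k kS; have := @mdist_ge0 R X (f (u k)) (u k.+1); lra.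
Qed.

Lemma pc_iter e a q S k : 0 < e -> pc f e a q S -> pc f e a (iter k f q) (S + k).
Proof.
move=> e0 h; elim: k => [|k IH]; first by rewrite addn0.
rewrite addnS -[(S + k).+1]addn1; exact: (pc_cat IH (@pc_step _ _ f _ _ e0)).
Qed.

Lemma Cl_finite (n : nat) (c delta : R) (a : X) :
  compact [set: X] -> 0 < c -> 0 < delta ->
  (forall x0 : X, exists s : seq X, (size s <= n)%N /\ stable_set f c x0 `<=` [set` s]) ->
  (forall xs : int -> X, (forall k : int, d (f (xs k)) (xs (k + 1)) < delta) ->
      exists ys : int -> X, (forall k : int, ys (k + 1) = f (ys k)) /\
        (forall k : int, d (ys k) (xs k) < c / 2)) ->
  chain_recurrent f a -> finite_set (Cl a).
Proof.
move=> cX c0 d0 hexp sh ha.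
apply: contrapT => inf.
have nin : forall s : seq X, exists x, Cl a x /\ x \notin s.
  move=> s; apply: contrapT => H; apply: inf.
  apply: (sub_finite_set _ (finite_seq s)) => x Clx /=; apply: contrapT => xs.
  by apply: H; exists x; split => //; apply/negP.
have BI : forall (s : seq X) (s' : seq X), exists s'' : seq X,
    [set x | Cl a x /\ x \notin s''] `<=` [set x | Cl a x /\ x \notin s] `&` [set x | Cl a x /\ x \notin s'].
  move=> s s'; exists (s ++ s') => x /= [Cx].
  by rewrite mem_cat negb_or => /andP[h1 h2].
have [y hy] := @cluster_lem R X (seq X) (fun s => [set x | Cl a x /\ x \notin s]) cX
  BI (ex_intro _ [::] I) (fun s => ltac:(have [x hx] := nin s; by exists x)).
have d40 : 0 < delta / 4 by rewrite divr_gt0.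
have : forall k, exists l : seq X, [/\ size l = k, uniq l &
    forall z, z \in l -> Cl a z /\ d y z < delta / 4].
  elim => [|k [l [sl ul hl]]]; first by exists [::].
  have [z [[Cz zl] yz]] := hy l _ d40.
  exists (z :: l); split => /=; [by rewrite sl | by rewrite zl ul |].
  by move=> z'; rewrite in_cons => /orP[/eqP->|/hl].
move=> /(_ n.+1) [[|p0 l'] [sl ul hl]]; first by [].
set l := p0 :: l' in sl ul hl.
have [Clp0 yp0] := hl p0 (mem_head _ _).
have d20 : 0 < delta / 2 by rewrite divr_gt0.
have [S S0 hS] := (pcP f (delta / 2) a p0).1 (Clp0.1 _ d20).
have hq : forall q, q \in l -> forall k, pc f delta a (iter k f q) (S + k).
  move=> q ql k; apply: pc_iter => //; apply: (@pc_swap_last delta a p0 q S S0 hS).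
  have [_ yq] := hl q ql; have := dtri p0 y q; rewrite (dsym p0 y); lra.
case: (pselect (forall q, q \in l -> forall k, d (iter k f q) (iter k f p0) <= c)) => hB.
  have [s [ss hs]] := hexp p0.
  have sub : {subset l <= s} by move=> q ql; apply: (hs q) => k; exact: hB.
  by have := uniq_leq_size ul sub; rewrite sl => h; have := leq_trans h ss; rewrite ltnn.
have [q [ql [k ck]]] : exists q, q \in l /\ exists k, c < d (iter k f q) (iter k f p0).
  apply: contrapT => H; apply: hB => q ql k; rewrite leNgt; apply/negP => ck.
  by apply: H; exists q; split => //; exists k.
set x := iter k f q in ck; set y' := iter k f p0 in ck.
have [Clq _] := hl q ql.
have [T0 T00 hT0] := (pcP f delta x a).1 (@reach_iter _ _ f fc a q k ha Clq.2 _ d0).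
have [T1 T10 hT1] := (pcP f delta y' a).1 (@reach_iter _ _ f fc a p0 k ha Clp0.2 _ d0).
have [u [u0 uS hu]] := hq q ql k.
have [v [v0 vS hv]] := hq p0 (mem_head _ _) k.
have [wx [wx0 wxT hwx]] := pc_cat (pc_cat hT0 (hq p0 (mem_head _ _) k)) hT1.
have [wy [wy0 wyT hwy]] := pc_cat (pc_cat hT1 (hq q ql k)) hT0.
rewrite (_ : (T1 + (S + k) + T0 = T0 + (S + k) + T1)%N) in wyT hwy; last by lia.
apply: (@word_contra _ _ f g fK gK n c delta a x y' (S + k) (T0 + (S + k) + T1)
  (catf u (S + k) wx) (catf v (S + k) wy) c0 d0 hexp sh).
- by rewrite catfL.
- by rewrite catfR // uS wx0.
- by rewrite catfL.
- by apply: chainp_cat => //; rewrite uS wx0.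
- by rewrite catfL.
- by rewrite catfR // vS wy0.
- by rewrite catfL.
- by apply: chainp_cat => //; rewrite vS wy0.
- lia.
- lia.
- exact: ck.
Qed.

End S6.

Arguments chainp_cat {R X f e u v l1 l2}.
Arguments pc_cat {R X f e x y z l1 l2}.

Lemma modS_full (k l : nat) : (0 < l)%N -> (l %| k.+1)%N -> (k %% l).+1 = l.
Proof.
move=> l0 h.
have h1 : (l %| (k %% l).+1)%N.
  by rewrite -(dvdn_addr _ (dvdn_mull (k %/ l) (dvdnn l))) addnS -divn_eq.
have := dvdn_leq (ltn0Sn _) h1; have := ltn_pmod k l0; lia.
Qed.

Section S7.
Context {R : realType} {X : metricType R}.
Local Notation d := (@mdist R X).
Variables (f g : X -> X).
Hypothesis fK : cancel f g.
Hypothesis gK : cancel g f.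
Hypothesis fc : continuous f.

Lemma periodic_shift (u : nat -> X) p : (forall k, u (k + p)%N = u k) ->
  forall m k, u (k + m * p)%N = u k.
Proof. by move=> hp; elim => [|m IH] k; rewrite ?mul0n ?addn0 // mulSn (addnC p) addnA hp IH. Qed.

Lemma periodic_pc e (u : nat -> X) p i j : (0 < p)%N -> (forall k, u (k + p)%N = u k) ->
  (forall k, d (f (u k)) (u k.+1) < e) -> exists2 l, (0 < l)%N & pc f e (u i) (u j) l.
Proof.
move=> p0 hp hu.
have ij : (i < j + i.+1 * p)%N by rewrite mulSn; have := leq_pmull i p0; lia.
exists (j + i.+1 * p - i)%N; first lia.
exists (fun k => u (i + k)%N); split.
- by rewrite addn0.
- by rewrite subnKC ?periodic_shift //; exact: ltnW.
- by move=> k _; rewrite addnS.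
Qed.

Lemma class_Cl a y : chain_class f a y -> Cl f a y.
Proof.
move=> h; split => e e0; have [u [p [p0 [hp [hu [[i ui] [j uj]]]]]]] := h e e0;
  apply/pcP; rewrite -ui -uj; exact: periodic_pc p0 hp hu.
Qed.

Lemma self_class x : chain_recurrent f x -> chain_class f x x.
Proof.
move=> hx e e0; have [l l0 [u [u0 ul hu]]] := (pcP f e x x).1 (hx e e0).
exists (fun k => u (k %% l)%N), l; split => //; split.
  by move=> k; rewrite modnDr.
split; last by split; exists 0%N; rewrite mod0n.
move=> k; rewrite modnS; case: ifP => hd.
  by have := hu (k %% l)%N (ltn_pmod _ l0); rewrite modS_full // ul -u0.
by apply: hu; exact: ltn_pmod.
Qed.

Lemma CR_f q : chain_recurrent f q -> chain_recurrent f (f q).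
Proof.
move=> hq e e0.
have [l l0 h1] := (pcP f e (f q) q).1 (@reach_f R X f fc q q hq hq e e0).
apply/pcP; exists (l + 1)%N; first lia.
exact: pc_cat h1 (pc_step f e q e0).
Qed.

Lemma CR_iter q k : chain_recurrent f q -> chain_recurrent f (iter k f q).
Proof. by move=> hq; elim: k => [|k IH] //=; exact: CR_f. Qed.

Lemma iter_inj k : injective (iter k f).
Proof. elim: k => [|k IH] //= x y /(can_inj fK); exact: IH. Qed.

End S7.

Arguments chainp_cat {R X f e u v l1 l2}.
Arguments pc_cat {R X f e x y z l1 l2}.

Section S8.
Context {R : realType} {X : metricType R}.
Local Notation d := (@mdist R X).
Variables (f g : X -> X).
Hypothesis fK : cancel f g.
Hypothesis gK : cancel g f.
Hypothesis fc : continuous f.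

Lemma step2 (n : nat) (c : R) (Fs : seq X) x :
  compact [set: X] -> 0 < c ->
  (forall x0 : X, exists s : seq X, (size s <= n)%N /\ stable_set f c x0 `<=` [set` s]) ->
  (forall q, chain_recurrent f q <-> q \in Fs) -> chain_recurrent f x.
Proof.
move=> cX c0 hexp hF.
case: (pselect (exists i j, (i < j)%N /\ iter i f x = iter j f x)) => [[i [j [ij eij]]]|nper].
  have per : iter (j - i) f x = x.
    apply: (@iter_inj R X f g fK i); rewrite -iterD subnKC ?(ltnW ij) //.
  move=> e e0; apply/pcP; exists (j - i)%N; first lia.
  exists (fun k => iter k f x); split => // k _.
  by rewrite iterS dxx.
exfalso.
have nper' : forall i j, (i < j)%N -> iter i f x <> iter j f x.
  by move=> i j ij eij; apply: nper; exists i, j.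
have clA : forall rho, 0 < rho -> exists m0, forall m, (m0 <= m)%N ->
    exists2 q, q \in Fs & d (iter m f x) q < rho.
  move=> rho r0; apply: contrapT => H.
  have H' : forall N, exists m, (N <= m)%N /\ forall q, q \in Fs -> rho <= d (iter m f x) q.
    move=> N; apply: contrapT => H2; apply: H; exists N => m Nm.
    apply: contrapT => H3; apply: H2; exists m; split => // q qF.
    rewrite leNgt; apply/negP => hlt; apply: H3; by exists q.
  pose B N := [set z | exists m, [/\ (N <= m)%N,
      (forall q, q \in Fs -> rho <= d (iter m f x) q) & z = iter m f x]].
  have BI : forall N N' : nat, exists N'' : nat, B N'' `<=` B N `&` B N'.
    move=> N N'; exists (maxn N N') => z [m [hm hq ->]].
    by rewrite geq_max in hm; case/andP: hm => h1 h2; split; exists m; split.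
  have Bn0 : forall N, B N !=set0.
    by move=> N; have [m [Nm hm]] := H' N; exists (iter m f x), m; split.
  have [y hy] := @cluster_lem R X nat B cX BI (ex_intro _ 0%N I) Bn0.
  have yCR : chain_recurrent f y.
    move=> e e0; have [r rr0 hr] := cont_eps f fc y e e0.
    pose th := Order.min r e.
    have th0 : 0 < th by rewrite lt_min rr0 e0.
    have thr : th <= r by rewrite ge_min lexx.
    have the : th <= e by rewrite ge_min lexx orbT.
    have [z1 [[m1 [_ _ ->]] y1]] := hy 0%N th th0.
    have [z2 [[m2 [m2m1 _ ->]] y2]] := hy (m1 + 2)%N th th0.
    apply/pcP; exists (m2 - m1)%N; first lia.
    exists (fun k => if k == 0%N then y else if k == (m2 - m1)%N then y
                     else iter (m1 + k) f x); split.
    - by [].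
    - have -> : (m2 - m1 == 0)%N = false by apply/eqP; lia.
      by rewrite eqxx.
    move=> [|k] kL /=.
      have -> : (1 == m2 - m1)%N = false by apply/eqP; lia.
      rewrite addn1 iterS.
      exact: hr _ (lt_le_trans y1 thr).
    have -> : (k.+1 == m2 - m1)%N = false by apply/eqP; lia.
    case: (boolP (k.+2 == m2 - m1)%N) => hk.
      have E : (m1 + k.+2 = m2)%N by move/eqP: hk; lia.
      rewrite -iterS -addnS E dsym.
      exact: lt_le_trans y2 the.
    by rewrite -iterS -addnS dxx.
  have yF := (hF y).1 yCR.
  have [z [[m [_ hm ->]] yz]] := hy 0%N rho r0.
  have := hm y yF; rewrite dsym; lra.
have [D D0 hD] : exists2 D, 0 < D & forall q, q \in Fs ->
    forall q', q' \in Fs -> q' <> q -> D <= d q q'.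
  apply: (@LM R X Fs (fun q r => forall q', q' \in Fs -> q' <> q -> r <= d q q')).
    by move=> q r r' h r'0 r'r q' q'F nq; exact: le_trans r'r (h q' q'F nq).
  move=> q qF.
  apply: (@LM R X Fs (fun q' r => q' <> q -> r <= d q q')).
    by move=> q' r r' h _ r'r nq; exact: le_trans r'r (h nq).
  move=> q' _; case: (eqVneq q' q) => [->|nq].
    by exists 1 => // nq.
  by exists (d q q') => //; rewrite mdist_gt0 eq_sym.
have D20 : 0 < D / 2 by rewrite divr_gt0.
have [r1 r10 hr1] : exists2 r, 0 < r & forall q, q \in Fs ->
    forall z, d q z < r -> d (f q) (f z) < D / 2.
  apply: (@LM R X Fs (fun q r => forall z, d q z < r -> d (f q) (f z) < D / 2)).
    by move=> q r r' h _ r'r z qz; apply: h; exact: lt_le_trans qz r'r.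
  by move=> q _; exact: cont_eps f fc q _ D20.
have c20 : 0 < c / 2 by rewrite divr_gt0.
pose rho := Order.min r1 (Order.min (c / 2) (D / 2)).
have rho0 : 0 < rho by rewrite !lt_min r10 c20 D20.
have rhor1 : rho <= r1 by rewrite ge_min lexx.
have rhoc : rho <= c / 2 by rewrite ge_min ge_min lexx orbT.
have rhoD : rho <= D / 2 by rewrite ge_min ge_min lexx !orbT.
have [m0 hm0] := clA rho rho0.
have FsI : forall q k, q \in Fs -> iter k f q \in Fs.
  by move=> q k qF; apply/hF; apply: (@CR_iter R X f fc); apply/hF.
have track : forall q, q \in Fs -> d (iter m0 f x) q < rho ->
    forall k, d (iter (k + m0) f x) (iter k f q) < rho.
  move=> q qF h0; elim => [|k IH]; first by rewrite add0n.
  have qkF := FsI q k qF; have qk1F := FsI q k.+1 qF.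
  have [q' q'F hq'] := hm0 (k.+1 + m0)%N (leq_addl _ _).
  rewrite dsym in IH.
  have h1 := hr1 _ qkF _ (lt_le_trans IH rhor1).
  rewrite -iterS -iterS -addSn in h1.
  case: (eqVneq q' (iter k.+1 f q)) => [eq|ne]; first by rewrite -eq.
  have h2 := hD _ qk1F _ q'F (elimN eqP ne).
  have h3 := dtri (iter k.+1 f q) (iter (k.+1 + m0) f x) q'.
  lra.
have [q0 q0F hq0] := hm0 m0 (leqnn _).
have [i [j [ij jF eij]]] := @PH R X (fun j => iter j f q0) (size Fs) Fs
  (fun j _ => FsI q0 j q0F) (leqnn _).
set p := (j - i)%N.
have p0 : (0 < p)%N by rewrite /p; lia.
have hp : forall l, iter (l * p + i) f q0 = iter i f q0.
  elim => [|l IH]; first by rewrite mul0n add0n.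
  rewrite mulSn -addnA iterD IH -iterD /p subnK ?(ltnW ij) //.
pose P l := iter (l * p + i + m0) f x.
have hP : forall l k, d (iter k f (P l)) (iter (k + i) f q0) < rho.
  move=> l k.
  have e1 : iter k f (P l) = iter (k + (l * p + i) + m0) f x by rewrite /P -iterD !addnA.
  have e2 : iter (k + (l * p + i)) f q0 = iter (k + i) f q0 by rewrite iterD hp -iterD.
  by rewrite e1 -e2; apply: track.
have [s [ss hs]] := hexp (P 0%N).
have [l [l' [ll l'n eqP']]] := @PH R X P n s (fun l _ => ltac:(
  apply: (hs (P l)) => k; have := hP l k; have := hP 0%N k;
  have := dtri (iter k f (P l)) (iter (k + i) f q0) (iter k f (P 0%N));
  rewrite (dsym (iter (k + i) f q0)); lra)) ss.
apply: (nper' _ _ _ eqP').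
rewrite ltn_add2r ltn_add2r ltn_pmul2r //.
Qed.

End S8.

Theorem theorem2p5 (R : realType) (X : metricType R) (f g : X -> X) (n : nat) :
  compact [set: X] ->
  continuous f -> continuous g -> cancel f g -> cancel g f ->
  pos_n_expansive f n ->
  shadowing f ->
  finite_set (chain_classes f) ->
  finite_set [set: X].
Proof.
move=> cX fc gc fK gK [c c0 hexp] sh fin.
have c20 : 0 < c / 2 by rewrite divr_gt0.
have [delta d0 shd] := sh (c / 2) c20.
have CRfin : finite_set (chain_recurrent f).
  apply: (@sub_finite_set _ _ (\bigcup_(C in chain_classes f) C)).
    move=> x hx; exists (chain_class f x); first by exists x.
    exact: (@self_class R X f x hx).
  apply: bigcup_finite => // C [a ha ->].
  apply: (@sub_finite_set _ _ (Cl f a)); first by move=> y; exact: (@class_Cl R X f a y).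
  exact: (@Cl_finite R X f g fK gK fc n c delta a cX c0 d0 hexp shd ha).
have [Fs hFs] := (finite_seqP _).1 CRfin.
apply: (@sub_finite_set _ _ (chain_recurrent f)) => // x _.
apply: (@step2 R X f g fK fc n c Fs x cX c0 hexp).
by move=> q; rewrite hFs.
Qed.
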